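(* Let $\lambda\mapsto|\psi_\lambda\rangle\in\mathbb{C}^N$ be a twice continuously differentiable curve of unit vectors, and let $\rho_\lambda=|\psi_\lambda\rangle\langle\psi_\lambda|$. At a fixed $\lambda$ put $|0\rangle=|\psi_\lambda\rangle$, $|v\rangle=\partial_\lambda|\psi_\lambda\rangle$ and $|v^\perp\rangle=|v\rangle-\langle 0|v\rangle|0\rangle$, and assume $|v^\perp\rangle\neq0$. Let $\mathcal{B}^\lambda_\alpha$ be any orthonormal basis of $\mathbb{C}^N$ that contains the two vectors $|\pm\rangle=\frac{1}{\sqrt2}\big(|0\rangle\pm|v^\perp\rangle/\langle v^\perp|v^\perp\rangle^{1/2}\big)$. Equivalently, $\mathcal{B}^\lambda_\alpha$ is any orthonormal eigenbasis of the SLD $L_\lambda=2(|v\rangle\langle0|+|0\rangle\langle v|)$. Then $$-\Big[\partial^2_{\delta\lambda}\,\mathrm{Coh}_{\mathcal{B}^\lambda_\alpha}(\rho_{\lambda+\delta\lambda})\Big]_{\delta\lambda=0}=4g^{FS}_\lambda.$$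
   Context: All logarithms are natural logarithms. For an orthonormal basis $\mathcal{B}=\{|x\rangle\}$, the relative entropy of coherence of $\mathcal{B}$ with respect to $\rho$ is $\mathrm{Coh}_{\mathcal{B}}(\rho)=-\mathcal{V}(\rho)+H(p)$. Here $p_x=\langle x|\rho|x\rangle$, $\mathcal{V}$ is the von Neumann entropy and $H$ is the Shannon entropy. The Fubini–Study metric is $g^{FS}_\lambda=\langle v|v\rangle-|\langle v|0\rangle|^2=\langle v^\perp|v^\perp\rangle$. Equivalently, $4g^{FS}_\lambda$ equals the quantum Fisher information of the pure-state family at $\lambda$. *)

(* Defs.v *)
From HB Require Import structures.
From mathcomp Require Import all_boot all_order all_algebra.
From mathcomp Require Import all_classical all_reals all_analysis.
From mathcomp Require Import complex.
Set Implicit Arguments. Unset Strict Implicit. Unset Printing Implicit Defensive.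
Import Order.TTheory GRing.Theory Num.Theory.
Import numFieldNormedType.Exports.
Local Open Scope ring_scope.
Local Open Scope classical_set_scope.

Section QDefs.
Variable R : realType.
Local Notation C := (complex R).

Definition cdot (N : nat) (u w : 'cV[C]_N) : C := \sum_(k < N) (u k 0)^* * w k 0.

Definition ketbra (N : nat) (u w : 'cV[C]_N) : 'M[C]_N :=
  \matrix_(i, j) (u i 0 * (w j 0)^*).

Definition C2 (f : R -> R) : Prop :=
  (forall x, derivable f x 1) /\ (forall x, derivable f^`() x 1) /\
  continuous (f^`(2) : R -> R).

Definition curveC2 (N : nat) (psi : R -> 'cV[C]_N) : Prop :=
  forall k : 'I_N, C2 (fun t => complex.Re (psi t k 0)) /\
                   C2 (fun t => complex.Im (psi t k 0)).

Definition dcurve (N : nat) (psi : R -> 'cV[C]_N) (mu : R) : 'cV[C]_N :=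
  \col_k (Complex ((fun t => complex.Re (psi t k 0))^`() mu)
                  ((fun t => complex.Im (psi t k 0))^`() mu)).

(* Shannon entropy (natural log; 0 ln 0 = 0 since ln 0 = 0 in the library) *)
Definition shannon (N : nat) (p : 'I_N -> R) : R := - \sum_(x < N) p x * ln (p x).

(* the eigenvalues (with multiplicity) of a square matrix: the roots of its
   characteristic polynomial, which splits over the algebraically closed C *)
Definition spectrum (N : nat) (A : 'M[C]_N) : seq C :=
  sval (closed_field_poly_normal (char_poly A)).

(* von Neumann entropy  V(rho) = - tr (rho ln rho) = - sum_i l_i ln l_i
   over the (real) eigenvalues l_i of the density matrix rho *)
Definition vonNeumann (N : nat) (rho : 'M[C]_N) : R :=
  - \sum_(l <- spectrum rho) complex.Re l * ln (complex.Re l).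

Definition orthonormal_basis (N : nat) (U : 'M[C]_N) : Prop :=
  forall i j : 'I_N, cdot (col i U) (col j U) = (i == j)%:R.

Definition coherence (N : nat) (U : 'M[C]_N) (rho : 'M[C]_N) : R :=
  - vonNeumann rho
  + shannon (fun x : 'I_N => complex.Re (cdot (col x U) (rho *m col x U))).

Definition gFS (N : nat) (psi0 v : 'cV[C]_N) : R :=
  complex.Re (cdot v v) - complex.Re (cdot v psi0 * (cdot v psi0)^*).

End QDefs.

(* Main.v *)
Require Import Defs.
From HB Require Import structures.
From mathcomp Require Import all_boot all_order all_algebra.
From mathcomp Require Import all_classical all_reals all_analysis.
From mathcomp Require Import complex.
From mathcomp Require Import ring lra.
Import Order.TTheory GRing.Theory Num.Theory.
Import numFieldNormedType.Exports.
Local Open Scope ring_scope.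
Local Open Scope classical_set_scope.
Set Implicit Arguments. Unset Strict Implicit.
Section A.
Variable R : realType.
Lemma der0_bound (G A B Z : R -> R) (t : R) :
  G t = 0 -> A t = 0 -> B t = 0 -> derivable A t 1 -> derivable B t 1 ->
  Z t = 0 -> {for t, continuous Z} ->
  (forall s, `|G s| <= (`|A s| + `|B s|) * Z s) -> is_derive t 1 G 0.
Proof.
move=> G0 A0 B0 dA dB Z0 cZ bnd.
have key : (fun h : R => h^-1 *: ((G \o shift t) (h *: 1) - G t)) @ 0^' --> (0:R).
  apply: norm_cvg0.
  apply: (@squeeze_cvgr _ _ _ _ (fun _ => 0) (fun h => (`|h^-1 *: ((A \o shift t) (h *: 1) - A t)| + `|h^-1 *: ((B \o shift t) (h *: 1) - B t)|) * Z (h + t))).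
  - near=> h; rewrite normr_ge0 /=.
    rewrite G0 A0 B0 !subr0 /= !normrZ -mulrDr -mulrA ler_wpM2l //.
    rewrite [_%:A]mulr1; exact: bnd.
  - exact: cvg_cst.
  - suff : (fun h => (`|h^-1 *: ((A \o shift t) (h *: 1) - A t)| + `|h^-1 *: ((B \o shift t) (h *: 1) - B t)|) * Z (h + t)) @ 0^' --> (`|'D_1 A t| + `|'D_1 B t|) * 0 by rewrite mulr0.
    apply: cvgM.
      apply: cvgD; apply: cvg_norm; [exact: dA | exact: dB].

    have sh : (fun h : R => h + t) @ 0^' --> t.
      apply: cvg_within_filter. rewrite -{2}(add0r t); apply: cvgD; [exact: cvg_id | exact: cvg_cst].
    have := continuous_cvg _ cZ sh; rewrite Z0; exact.
apply: DeriveDef; first by apply/cvg_ex; exists 0.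
exact: cvg_lim key.
Unshelve. all: by end_near.
Qed.
Lemma phi_bound (s : R) : 0 < s <= 1 ->
  `|Num.sqrt s * ln s| <= 4 * Num.sqrt (Num.sqrt s).
Proof.
case/andP=> s0 s1.
set r := Num.sqrt (Num.sqrt s).
have r0 : 0 < r by rewrite !sqrtr_gt0.
have sE : s = r ^+ 4.
  by rewrite /r -[4%N]/(2 * 2)%N exprM !sqr_sqrtr ?sqrtr_ge0 // ltW.
have ssE : Num.sqrt s = r ^+ 2 by rewrite /r sqr_sqrtr ?sqrtr_ge0.
have lnE : ln s = ln r *+ 4 by rewrite sE lnXn.
have lr : - ln r < r^-1.
  by rewrite -lnV ?posrE // ln_sublinear // invr_gt0.
have lnle : ln s <= 0 by apply: ln_le0.
have r0' : 0 <= r by exact: ltW.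
rewrite normrM ssE ger0_norm ?exprn_ge0 // ler0_norm //.
rewrite lnE -mulNrn.
have : r ^+ 2 * (- ln r *+ 4) <= r ^+ 2 * (r^-1 *+ 4).
  rewrite ler_wpM2l ?exprn_ge0 //. rewrite ler_pMn2r //; exact: ltW.
move/le_trans; apply.
rewrite -mulr_natr expr2; rewrite le_eqVlt; apply/orP; left; apply/eqP; field; exact: lt0r_neq0.
Qed.

Definition phi (s : R) := Num.sqrt s * ln s.

Lemma phi_cont0 : {for 0, continuous phi}.
Proof.
rewrite /prop_for /continuous_at. have -> : phi 0 = 0 by rewrite /phi sqrtr0 mul0r.
apply: norm_cvg0.
apply: (@squeeze_cvgr _ _ _ _ (fun _ => 0) (fun s => 4 * Num.sqrt (Num.sqrt `|s|))).
- near=> s; rewrite normr_ge0 /=.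
  have [s0|s0] := leP s 0.
    by rewrite /phi ler0_sqrtr // mul0r normr0 mulr_ge0 ?sqrtr_ge0.
  rewrite (gtr0_norm s0); apply: phi_bound; rewrite s0 /=.
  have : `|s| <= 1 by near: s; exact: (@nbhs0_le _ R^o _ ltr01).
  by rewrite (gtr0_norm s0).
- exact: cvg_cst.
- suff : (fun s : R => 4 * Num.sqrt (Num.sqrt `|s|)) @ (0:R) --> 4 * Num.sqrt (Num.sqrt `|0:R|) by rewrite normr0 !sqrtr0 mulr0.
  apply: cvgM; first exact: cvg_cst.
  apply: continuous_cvg; first exact: sqrt_continuous.
  apply: continuous_cvg; first exact: sqrt_continuous.
  exact: cvg_norm.
Unshelve. all: by end_near.
Qed.
Lemma sqrt_pp_le (a b : R) : Num.sqrt (a ^+ 2 + b ^+ 2) <= `|a| + `|b|.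
Proof.
have h : 0 <= `|a| + `|b| by rewrite addr_ge0.
rewrite -{1}(ger0_norm h) -(sqrtr_sqr (`|a| + `|b|)) ler_sqrt ?sqr_ge0 //.
rewrite sqrrD !real_normK ?num_real // -addrA lerD2l lerDr.
by rewrite mulrn_wge0 ?mulr_ge0.
Qed.

Lemma le_sqrt_pp (a b : R) : `|a| <= Num.sqrt (a ^+ 2 + b ^+ 2).
Proof.
by rewrite -sqrtr_sqr ler_sqrt ?addr_ge0 ?sqr_ge0 // lerDl sqr_ge0.
Qed.

Definition pp (A B : R -> R) t := A t ^+ 2 + B t ^+ 2.
Definition HH (A B : R -> R) t := pp A B t * ln (pp A B t).
Definition dp (A B : R -> R) t := 2 * (A t * derive1 A t + B t * derive1 B t).

Lemma pp_ge0 (A B : R -> R) (t : R) : 0 <= pp A B t.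
Proof. by rewrite /pp addr_ge0 ?sqr_ge0. Qed.

Lemma is_derive_ext (f g : R -> R) (t d : R) : f =1 g -> is_derive t 1 f d -> is_derive t 1 g d.
Proof. by move=> /funext ->. Qed.

Lemma is_derive_conv (f g : R -> R) (t d d' : R) : f =1 g -> d = d' ->
  is_derive t 1 f d -> is_derive t 1 g d'.
Proof. by move=> /funext -> ->. Qed.

Lemma pp_derive (A B : R -> R) (t : R) : derivable A t 1 -> derivable B t 1 ->
  is_derive t 1 (pp A B) (dp A B t).
Proof.
move=> dA dB.
have dA' := derivableP dA; have dB' := derivableP dB.
have H := is_deriveD (is_deriveX 2 dA') (is_deriveX 2 dB').
apply: (is_derive_conv _ _ H); first by move=> s; rewrite /pp.
rewrite /dp !derive1E /GRing.scale /=; ring.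
Qed.

Lemma HH_derive (A B : R -> R) (t : R) : derivable A t 1 -> derivable B t 1 ->
  is_derive t 1 (HH A B) (dp A B t * (ln (pp A B t) + 1)).
Proof.
move=> dA dB; have dp0 := pp_derive dA dB.
have [p0|] := ltP 0 (pp A B t).
  have dl : is_derive t 1 (@ln R \o pp A B) ((pp A B t)^-1 * dp A B t).
    by apply: is_derive1_comp; apply: is_derive1_ln.
  have H := is_deriveM dp0 dl.
  apply: (is_derive_conv _ _ H); first by move=> s; rewrite /HH.
  rewrite /GRing.scale /=; field; exact: lt0r_neq0.
rewrite le_eqVlt ltNge pp_ge0 orbF => /eqP p0.
have [At Bt] : A t = 0 /\ B t = 0.
  move: p0; rewrite /pp => /eqP; rewrite paddr_eq0 ?sqr_ge0 // !sqrf_eq0.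
  by case/andP => /eqP -> /eqP ->.
have -> : dp A B t * (ln (pp A B t) + 1) = 0 by rewrite /dp At Bt !mul0r addr0 mulr0 mul0r.
apply: (@der0_bound _ A B (fun s => `|phi (pp A B s)|)) => //.
- by rewrite /HH p0 mul0r.
- by rewrite p0 /phi sqrtr0 mul0r normr0.
- have cp : {for t, continuous (pp A B)}.
    by apply: differentiable_continuous; apply/derivable1_diffP; case: dp0.
  have cp' : pp A B x @[x --> t] --> 0 by rewrite -p0; exact: cp.
  have := continuous_cvg _ (phi_cont0) cp'.
  have -> : phi 0 = 0 by rewrite /phi sqrtr0 mul0r.
  move=> h; rewrite /prop_for /continuous_at p0 /phi sqrtr0 mul0r normr0.
  have := cvg_norm (h _); rewrite normr0; exact.
- move=> s; rewrite /HH.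
  have -> : pp A B s * ln (pp A B s) = Num.sqrt (pp A B s) * phi (pp A B s).
    by rewrite /phi mulrA -expr2 sqr_sqrtr ?pp_ge0.
  rewrite normrM ler_wpM2r // ger0_norm ?sqrtr_ge0 //; exact: sqrt_pp_le.
Qed.

Definition D1 (A B : R -> R) t := dp A B t * (ln (pp A B t) + 1).
Definition ddp (A B : R -> R) t := 2 * (derive1 A t ^+ 2 + A t * derive1 (derive1 A) t
   + (derive1 B t ^+ 2 + B t * derive1 (derive1 B) t)).

Lemma dp_derive (A B : R -> R) (t : R) : derivable A t 1 -> derivable B t 1 ->
  derivable (derive1 A) t 1 -> derivable (derive1 B) t 1 ->
  is_derive t 1 (dp A B) (ddp A B t).
Proof.
move=> dA dB dA' dB'.
have dA1 := derivableP dA; have dB1 := derivableP dB.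
have dA2 := derivableP dA'; have dB2 := derivableP dB'.
have H := is_deriveZ 2 (is_deriveD (is_deriveM dA1 dA2) (is_deriveM dB1 dB2)).
apply: (is_derive_conv _ _ H); first by move=> s; rewrite /dp.
rewrite /ddp !derive1E /GRing.scale /=.
move: (A t) (B t) ('D_1 A t) ('D_1 B t) ('D_1 (derive1 A) t) ('D_1 (derive1 B) t) => a b a1 b1 a2 b2; ring.
Qed.

Lemma D1_derive_pos (A B : R -> R) (t : R) : derivable A t 1 -> derivable B t 1 ->
  derivable (derive1 A) t 1 -> derivable (derive1 B) t 1 -> 0 < pp A B t ->
  is_derive t 1 (D1 A B) (ddp A B t * (ln (pp A B t) + 1) + dp A B t ^+ 2 / pp A B t).
Proof.
move=> dA dB dA' dB' p0.
have h1 := dp_derive dA dB dA' dB'.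
have h2 := pp_derive dA dB.
have dl : is_derive t 1 (@ln R \o pp A B) ((pp A B t)^-1 * dp A B t).
  by apply: is_derive1_comp; apply: is_derive1_ln.
have H := is_deriveM h1 (is_deriveD dl (is_derive_cst (1:R) t 1)).
apply: (is_derive_conv _ _ H); first by move=> s; rewrite /D1.
rewrite /GRing.scale /= addr0.
have -> : (@ln R \o pp A B + (cst 1)) t = ln (pp A B t) + 1 by [].
move: (pp A B t) (dp A B t) (ddp A B t) (lt0r_neq0 p0) => P Q S PN.
field; exact: PN.
Qed.

Lemma pp_cont (A B : R -> R) (t : R) : derivable A t 1 -> derivable B t 1 ->
  {for t, continuous (pp A B)}.
Proof.
move=> dA dB; apply: differentiable_continuous; apply/derivable1_diffP.
by case: (pp_derive dA dB).
Qed.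

Lemma D1_derive_zero (A B : R -> R) (t : R) : derivable A t 1 -> derivable B t 1 ->
  derivable (derive1 A) t 1 -> derivable (derive1 B) t 1 ->
  A t = 0 -> B t = 0 -> derive1 A t = 0 -> derive1 B t = 0 ->
  is_derive t 1 (D1 A B) 0.
Proof.
move=> dA dB dA' dB' At Bt A't B't.
have p0 : pp A B t = 0 by rewrite /pp At Bt expr0n addr0.
apply: (@der0_bound _ (derive1 A) (derive1 B)
   (fun s => 2 * (`|phi (pp A B s)| + Num.sqrt (pp A B s)))).
- by rewrite /D1 /dp At Bt !mul0r addr0 mulr0 mul0r.
- exact: A't.
- exact: B't.
- exact: dA'.
- exact: dB'.
- by rewrite p0 /phi sqrtr0 mul0r normr0 addr0 mulr0.
- have cp' : pp A B x @[x --> t] --> 0 by rewrite -p0; exact: (pp_cont dA dB).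
  have h := continuous_cvg _ (phi_cont0) cp'.
  have hs := continuous_cvg _ (@sqrt_continuous R 0) cp'.
  rewrite /prop_for /continuous_at p0.
  have -> : 2 * (`|phi 0| + Num.sqrt 0) = 2 * (`|0:R| + 0 :R).
    by rewrite /phi sqrtr0 mul0r.
  apply: cvgM; first exact: cvg_cst.
  apply: cvgD; last by have := hs _; rewrite sqrtr0; exact.
  apply: cvg_norm; have := h _; rewrite /phi sqrtr0 mul0r; exact.
- move=> s; rewrite /D1 /dp.
  set a := A s; set b := B s; set a' := derive1 A s; set b' := derive1 B s.
  have ha : `|a| <= Num.sqrt (pp A B s) by exact: le_sqrt_pp.
  have hb : `|b| <= Num.sqrt (pp A B s) by rewrite /pp addrC; exact: le_sqrt_pp.
  have e1 : `|a * a' + b * b'| <= Num.sqrt (pp A B s) * (`|a'| + `|b'|).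
    apply: (le_trans (ler_normD _ _)); rewrite !normrM mulrDr.
    by apply: lerD; rewrite ler_wpM2r.
  have e2 : `|ln (pp A B s) + 1| <= `|ln (pp A B s)| + 1.
    by apply: (le_trans (ler_normD _ _)); rewrite normr1.
  rewrite !normrM (ger0_norm (sqrtr_ge0 _)) normr_nat.
  have X0 := normr_ge0 (a * a' + b * b'); have Y0 := normr_ge0 (ln (pp A B s) + 1).
  have a0 := normr_ge0 a'; have b0 := normr_ge0 b'; have L0 := normr_ge0 (ln (pp A B s)).
  have P0 := sqrtr_ge0 (pp A B s).
  move: e1 e2 X0 Y0 a0 b0 L0 P0.
  move: `|a * a' + b * b'| `|ln (pp A B s) + 1| `|a'| `|b'| `|ln (pp A B s)| (Num.sqrt (pp A B s)).
  move=> X Y Sa Sb L P e1 e2 X0 Y0 a0 b0 L0 P0.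
  have : X * Y <= (P * (Sa + Sb)) * (L + 1) by apply: ler_pM.
  nra.
Qed.
End A.
Section B.
Variable R : realType.
Local Notation C := (R[i]).

Lemma idem_spec N (A : 'M[C]_N) (z : C) : A *m A = A ->
  z \in spectrum A -> z = 0 \/ z = 1.
Proof.
move=> AA; rewrite /spectrum; case: closed_field_poly_normal => r /= Er zr.
have : root (char_poly A) z.
  by rewrite Er rootZ ?root_prod_XsubC // lead_coef_eq0 monic_neq0 // char_poly_monic.
rewrite -eigenvalue_root_char => /eigenvalueP [w wA w0].
have : (z * z) *: w = z *: w.
  by rewrite -scalerA -wA scalemxAl -wA -mulmxA AA.
move/eqP; rewrite -subr_eq0 -scalerBl scaler_eq0 (negbTE w0) orbF subr_eq0 => /eqP zz.
have [->|z0] := eqVneq z 0; first by left.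
right; apply: (mulfI z0); by rewrite zz mulr1.
Qed.

Lemma vN_idem N (A : 'M[C]_N) : A *m A = A -> vonNeumann A = 0.
Proof.
move=> AA; rewrite /vonNeumann big_seq big1 ?oppr0 // => z /(@idem_spec N A z AA) [->|->].
  by rewrite mul0r.
by rewrite ln1 mulr0.
Qed.

Lemma cdotE N (u w : 'cV[C]_N) : cdot u w = ((map_mx conjc u)^T *m w) 0 0.
Proof. by rewrite /cdot !mxE; apply: eq_bigr => k _; rewrite !mxE. Qed.

Lemma ketbra_mul N (u w x : 'cV[C]_N) : ketbra u w *m x = cdot w x *: u.
Proof.
apply/matrixP => k l; rewrite !mxE /cdot mulr_suml; apply: eq_bigr => j _.
by rewrite /ketbra mxE (ord1 l); ring.
Qed.

Lemma ketbra_idem N (u : 'cV[C]_N) : cdot u u = 1 -> ketbra u u *m ketbra u u = ketbra u u.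
Proof.
move=> uu; apply/matrixP => k l; rewrite !mxE.
under eq_bigr do rewrite /ketbra !mxE.
rewrite -[RHS]mul1r -uu /cdot mulr_suml; apply: eq_bigr => j _.
ring.
Qed.


Lemma cdotC N (u w : 'cV[C]_N) : cdot u w = (cdot w u)^*.
Proof.
rewrite /cdot rmorph_sum; apply: eq_bigr => k _.
by rewrite rmorphM /= conjCK mulrC.
Qed.

Lemma cdotDr N (u w w' : 'cV[C]_N) : cdot u (w + w') = cdot u w + cdot u w'.
Proof. by rewrite /cdot -big_split; apply: eq_bigr => k _; rewrite mxE mulrDr. Qed.

Lemma cdotZr N (u w : 'cV[C]_N) a : cdot u (a *: w) = a * cdot u w.
Proof. by rewrite /cdot mulr_sumr; apply: eq_bigr => k _; rewrite mxE mulrCA. Qed.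

Lemma cdotNr N (u w : 'cV[C]_N) : cdot u (- w) = - cdot u w.
Proof. by rewrite -scaleN1r cdotZr mulN1r. Qed.

Lemma cdotBr N (u w w' : 'cV[C]_N) : cdot u (w - w') = cdot u w - cdot u w'.
Proof. by rewrite cdotDr cdotNr. Qed.

Lemma cdotDl N (u u' w : 'cV[C]_N) : cdot (u + u') w = cdot u w + cdot u' w.
Proof. by rewrite cdotC cdotDr rmorphD /= -!cdotC. Qed.

Lemma cdotZl N (u w : 'cV[C]_N) a : cdot (a *: u) w = a^* * cdot u w.
Proof. by rewrite cdotC cdotZr rmorphM /= -!cdotC. Qed.

Lemma cdotNl N (u w : 'cV[C]_N) : cdot (- u) w = - cdot u w.
Proof. by rewrite cdotC cdotNr rmorphN /= -!cdotC. Qed.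

Lemma cdotBl N (u u' w : 'cV[C]_N) : cdot (u - u') w = cdot u w - cdot u' w.
Proof. by rewrite cdotDl cdotNl. Qed.

Lemma Re_conjM (z : C) : complex.Re (z^* * z) = complex.Re z ^+ 2 + complex.Im z ^+ 2.
Proof. case: z => a b /=. ring. Qed.

Lemma Im_conjM (z : C) : complex.Im (z^* * z) = 0.
Proof. case: z => a b /=. ring. Qed.

Lemma conj_real (r : R) : (((r%:C)%C)^*)%R = (r%:C)%C :> C.
Proof. apply/eqP; rewrite eq_complex /= oppr0 !eqxx. done. Qed.

Lemma cdot_self N (u : 'cV[C]_N) :
  cdot u u = (\sum_k (complex.Re (u k 0) ^+ 2 + complex.Im (u k 0) ^+ 2))%:C%C.
Proof.
rewrite /cdot rmorph_sum; apply: eq_bigr => k _.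
case: (u k 0) => a b; apply/eqP; rewrite eq_complex /=; apply/andP; split; apply/eqP; ring.
Qed.

Lemma cdot_self_gt0 N (u : 'cV[C]_N) : u != 0 -> 0 < complex.Re (cdot u u).
Proof.
move=> u0; rewrite cdot_self /=.
have [k uk] : exists k, u k 0 != 0.
  apply/existsP; apply: contraNT u0 => /existsPn H; apply/eqP/matrixP => i j.
  by rewrite (ord1 j) mxE; apply/eqP; move: (H i); rewrite negbK.
have hr : 0 <= \sum_(l < N | l != k) (complex.Re (u l 0) ^+ 2 + complex.Im (u l 0) ^+ 2).
  by apply: sumr_ge0 => l _; rewrite addr_ge0 ?sqr_ge0.
have hk : 0 < complex.Re (u k 0) ^+ 2 + complex.Im (u k 0) ^+ 2.
  move: uk; case: (u k 0) => a b; rewrite eq_complex /= negb_and => H.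
  have [a0|a0] := eqVneq a 0.
    rewrite a0 expr0n add0r; move: H; rewrite a0 eqxx /= => b0.
    by rewrite lt0r sqrf_eq0 ?b0 ?a0 sqr_ge0.
  have : 0 < a ^+ 2 by rewrite lt0r sqrf_eq0 a0 sqr_ge0.
  move=> h; apply: (lt_le_trans h); rewrite lerDl; exact: sqr_ge0.
rewrite (bigD1 k) //=; apply: (lt_le_trans hk); rewrite lerDl; exact: hr.
Qed.

Lemma complete N (U : 'M[C]_N) (u : 'cV[C]_N) : orthonormal_basis U ->
  \sum_x (cdot (col x U) u)^* * cdot (col x U) u = cdot u u.
Proof.
move=> hU; set Uh := (map_mx Num.conj U)^T.
have h1 : Uh *m U = 1%:M.
  apply/matrixP => i j; rewrite !mxE -hU /cdot; apply: eq_bigr => k _.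
  by rewrite !mxE.
have h2 : U *m Uh = 1%:M by apply: mulmx1C.
have h3 : forall x, cdot (col x U) u = (Uh *m u) x 0.
  by move=> x; rewrite /cdot mxE; apply: eq_bigr => k _; rewrite !mxE.
under eq_bigr do rewrite h3.
rewrite -[LHS]/(cdot (Uh *m u) (Uh *m u)) !cdotE.
have h4 : (map_mx Num.conj (Uh *m u))^T = (map_mx Num.conj u)^T *m U.
  rewrite map_mxM trmx_mul; congr (_ *m _).
  by apply/matrixP => i j; rewrite !mxE /= conjCK.
by rewrite h4 mulmxA -(mulmxA _ U) h2 mulmx1.
Qed.
Lemma ReCdot N (w u : 'cV[C]_N) : complex.Re (cdot w u) =
  \sum_k (complex.Re (w k 0) * complex.Re (u k 0) + complex.Im (w k 0) * complex.Im (u k 0)).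
Proof.
rewrite /cdot raddf_sum; apply: eq_bigr => k _.
by case: (w k 0) => a b; case: (u k 0) => c d /=; ring.
Qed.

Lemma ImCdot N (w u : 'cV[C]_N) : complex.Im (cdot w u) =
  \sum_k (complex.Re (w k 0) * complex.Im (u k 0) - complex.Im (w k 0) * complex.Re (u k 0)).
Proof.
rewrite /cdot raddf_sum; apply: eq_bigr => k _.
by case: (w k 0) => a b; case: (u k 0) => c d /=; ring.
Qed.
End B.
Section C.
Variable R : realType.
Local Notation C := (R[i]).

Lemma Re_cdot_derive N (w : 'cV[C]_N) (psi : R -> 'cV[C]_N) (t : R) :
  (forall k, derivable (fun s => complex.Re (psi s k 0)) t 1) ->
  (forall k, derivable (fun s => complex.Im (psi s k 0)) t 1) ->
  is_derive t 1 (fun s => complex.Re (cdot w (psi s))) (complex.Re (cdot w (dcurve psi t))).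
Proof.
move=> hr hi.
have H := is_derive_sum (fun k => is_deriveD (is_deriveZ (complex.Re (w k 0)) (derivableP (hr k)))
                                   (is_deriveZ (complex.Im (w k 0)) (derivableP (hi k)))).
apply: (is_derive_conv _ _ H).
  by move=> s; rewrite fct_sumE ReCdot.
rewrite ReCdot; apply: eq_bigr => k _; rewrite !mxE /= !derive1E.
by rewrite /GRing.scale.
Qed.

Lemma Im_cdot_derive N (w : 'cV[C]_N) (psi : R -> 'cV[C]_N) (t : R) :
  (forall k, derivable (fun s => complex.Re (psi s k 0)) t 1) ->
  (forall k, derivable (fun s => complex.Im (psi s k 0)) t 1) ->
  is_derive t 1 (fun s => complex.Im (cdot w (psi s))) (complex.Im (cdot w (dcurve psi t))).
Proof.
move=> hr hi.
have H := is_derive_sum (fun k => is_deriveB (is_deriveZ (complex.Re (w k 0)) (derivableP (hi k)))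
                                   (is_deriveZ (complex.Im (w k 0)) (derivableP (hr k)))).
apply: (is_derive_conv _ _ H).
  by move=> s; rewrite fct_sumE ImCdot.
rewrite ImCdot; apply: eq_bigr => k _; rewrite !mxE /= !derive1E.
by rewrite /GRing.scale.
Qed.
End C.

Set Implicit Arguments. Unset Strict Implicit.
Section S.
Variable R : realType.
Lemma derive1_shift (g : R -> R) (lam : R) :
  derive1 (fun d => g (lam + d)) = fun d => derive1 g (lam + d).
Proof.
apply/funext => d; rewrite /derive1.
suff -> : (fun h : R => h^-1 *: (g (lam + (h + d)) - g (lam + d))) =
  (fun h => h^-1 *: (g (h + (lam + d)) - g (lam + d))) by [].
by apply/funext => h; rewrite addrCA.
Qed.

Lemma derivable_shift (g : R -> R) (lam d : R) :
  derivable g (lam + d) 1 -> derivable (fun d => g (lam + d)) d 1.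
Proof.
rewrite /derivable.
suff -> : (fun h : R => h^-1 *: (((fun d => g (lam + d)) \o shift d) (h *: 1) - g (lam + d))) =
  (fun h => h^-1 *: ((g \o shift (lam + d)) (h *: 1) - g (lam + d))) by [].
by apply/funext => h /=; rewrite addrCA.
Qed.
Lemma solve2 (S Cc a w : R[i]) : S != 0 -> Cc != 0 ->
  S * (a + Cc * w) = 0 -> S * (a - Cc * w) = 0 -> a = 0 /\ w = 0.
Proof.
move=> S0 C0 /eqP e1 /eqP e2; move: e1 e2.
rewrite !mulf_eq0 (negbTE S0) /= => /eqP e1 /eqP e2.
have hw : (Cc * 2) * w = (a + Cc * w) - (a - Cc * w) by ring.
rewrite e1 e2 subrr in hw.
move: hw => /eqP; rewrite !mulf_eq0 (negbTE C0) pnatr_eq0 /= => /eqP w0.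
by move: e1; rewrite w0 mulr0 addr0.
Qed.
Lemma sum2 N (i j : 'I_N) (F : 'I_N -> R) : i != j ->
  (forall x, x != i -> x != j -> F x = 0) -> \sum_x F x = F i + F j.
Proof.
move=> ij H; rewrite (bigD1 i) //= (bigD1 j) //= 1?eq_sym // big1 ?addr0 //.
by move=> x /andP [xi xj]; apply: H.
Qed.

Lemma Re_realM (r : R) (w : R[i]) : complex.Re ((r%:C)%C * w) = r * complex.Re w.
Proof. by case: w => a b /=; ring. Qed.

Lemma Im_realM (r : R) (w : R[i]) : complex.Im ((r%:C)%C * w) = r * complex.Im w.
Proof. by case: w => a b /=; ring. Qed.
Lemma cdot_decomp N (w e : 'cV[R[i]]_N) (zz : R[i]) : cdot w e = 0 -> cdot e e = 1 ->
  cdot (w + zz *: e) (w + zz *: e) = cdot w w + zz^* * zz.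
Proof.
move=> we ee; rewrite cdotDl !cdotDr !cdotZl !cdotZr we (cdotC e w) we ee.
by rewrite conjC0 !mulr0 !addr0 add0r mulr1.
Qed.
End S.

Unset Implicit Arguments.
Theorem proposition2 (R : realType) (N : nat) (psi : R -> 'cV[R[i]]_N)
  (hunit : forall t : R, cdot (psi t) (psi t) = 1)
  (hC2 : curveC2 psi)
  (lam : R) (U : 'M[R[i]]_N) (hU : orthonormal_basis U) :
  let ket0 := psi lam in
  let v := dcurve psi lam in
  let vperp := v - cdot ket0 v *: ket0 in
  let c := ((Num.sqrt (complex.Re (cdot vperp vperp)))^-1)%:C%C in
  let s := ((Num.sqrt (2 : R))^-1)%:C%C in
  let ketplus := s *: (ket0 + c *: vperp) in
  let ketminus := s *: (ket0 - c *: vperp) in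
  vperp != 0 ->
  (exists i : 'I_N, col i U = ketplus) ->
  (exists j : 'I_N, col j U = ketminus) ->
  let f := fun dl : R => coherence U (ketbra (psi (lam + dl)) (psi (lam + dl))) in
  (\forall dl \near (0 : R), derivable f dl 1) /\
  derivable (derive1 f) 0 1 /\
  - derive1n 2 f 0 = 4 * gFS ket0 v.
Proof.
move=> ket0 v vperp c s ketplus ketminus vp0 [i Hi] [j Hj] f.
pose Aof (x : 'I_N) := fun t => complex.Re (cdot (col x U) (psi t)).
pose Bof (x : 'I_N) := fun t => complex.Im (cdot (col x U) (psi t)).
have hr k t : derivable (fun s => complex.Re (psi s k 0)) t 1 by case: (hC2 k) => [[]].
have hi k t : derivable (fun s => complex.Im (psi s k 0)) t 1 by case: (hC2 k) => _ [].
have hr2 k t : derivable (fun s => complex.Re (dcurve psi s k 0)) t 1.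
  have -> : (fun s => complex.Re (dcurve psi s k 0)) = derive1 (fun s => complex.Re (psi s k 0)).
    by apply/funext => u; rewrite mxE.
  by case: (hC2 k) => [[_ []]].
have hi2 k t : derivable (fun s => complex.Im (dcurve psi s k 0)) t 1.
  have -> : (fun s => complex.Im (dcurve psi s k 0)) = derive1 (fun s => complex.Im (psi s k 0)).
    by apply/funext => u; rewrite mxE.
  by case: (hC2 k) => _ [_ []].
have hA (x : 'I_N) (t : R) : is_derive t 1 (Aof x) (complex.Re (cdot (col x U) (dcurve psi t))).
  exact: Re_cdot_derive.
have hB (x : 'I_N) (t : R) : is_derive t 1 (Bof x) (complex.Im (cdot (col x U) (dcurve psi t))).
  exact: Im_cdot_derive.
have dA (x : 'I_N) (t : R) : derivable (Aof x) t 1 by case: (hA x t).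
have dB (x : 'I_N) (t : R) : derivable (Bof x) t 1 by case: (hB x t).
have dAE x : derive1 (Aof x) = fun t => complex.Re (cdot (col x U) (dcurve psi t)).
  by apply/funext => t; rewrite derive1E; case: (hA x t).
have dBE x : derive1 (Bof x) = fun t => complex.Im (cdot (col x U) (dcurve psi t)).
  by apply/funext => t; rewrite derive1E; case: (hB x t).
have dA' (x : 'I_N) (t : R) : derivable (derive1 (Aof x)) t 1.
  by rewrite dAE; case: (Re_cdot_derive (col x U) (hr2^~ t) (hi2^~ t)).
have dB' (x : 'I_N) (t : R) : derivable (derive1 (Bof x)) t 1.
  by rewrite dBE; case: (Im_cdot_derive (col x U) (hr2^~ t) (hi2^~ t)).
pose F := fun t => - \sum_x HH (Aof x) (Bof x) t.
pose G := fun t => - \sum_x D1 (Aof x) (Bof x) t.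
have hF (t : R) : is_derive t 1 F (G t).
  have H := is_deriveN (is_derive_sum (fun x => HH_derive (dA x t) (dB x t))).
  apply: (is_derive_conv _ _ H) => //.
  by move=> u; rewrite /F fct_sumE.
have hf : f = fun dl => F (lam + dl).
  apply/funext => dl; rewrite /f /coherence vN_idem ?ketbra_idem // oppr0 add0r /shannon.
  congr (- _); apply: eq_bigr => x _.
  rewrite ketbra_mul cdotZr (cdotC (psi (lam + dl))) Re_conjM.
  by rewrite /HH /pp.
have dFE : derive1 F = G by apply/funext => t; rewrite derive1E; case: (hF t).
split.
  by near=> dl; rewrite hf; apply: derivable_shift; case: (hF (lam + dl)).
have df1 : derive1 f = fun d => G (lam + d) by rewrite hf derive1_shift dFE.
set z := cdot ket0 v.
set P := cdot vperp vperp.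
have hk00 : cdot ket0 ket0 = 1 := hunit lam.
have hvp0 : cdot vperp ket0 = 0.
  by rewrite /vperp cdotBl cdotZl (cdotC v ket0) hk00 mulr1 subrr.
have hvE : v = vperp + z *: ket0 by rewrite /vperp subrK.
have hvpv : cdot vperp v = P.
  have -> : cdot vperp v = cdot vperp (vperp + z *: ket0) by rewrite -hvE.
  by rewrite cdotDr cdotZr hvp0 mulr0 addr0.
have hPE : P = (complex.Re P)%:C%C by rewrite /P cdot_self.
have Pgt0 : 0 < complex.Re P by apply: cdot_self_gt0.
set n := Num.sqrt (complex.Re P).
have n0 : 0 < n by rewrite sqrtr_gt0.
have nn : n ^+ 2 = complex.Re P by rewrite sqr_sqrtr // ltW.
set rv := (Num.sqrt (2:R))^-1.
have rv0 : 0 < rv by rewrite invr_gt0 sqrtr_gt0.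
have rr : rv ^+ 2 = 2^-1 by rewrite exprVn sqr_sqrtr.
have cE : c = (n^-1)%:C%C by [].
have sE : s = rv%:C%C by [].
have cs : s^* = s by rewrite sE conj_real.
have cc : c^* = c by rewrite cE conj_real.
have s0 : s != 0 by rewrite sE; apply/eqP => /complexI /eqP; rewrite gt_eqF.
have c0 : c != 0 by rewrite cE; apply/eqP => /complexI /eqP; rewrite gt_eqF // invr_gt0.
have hai : cdot (col i U) ket0 = s.
  by rewrite Hi /ketplus cdotZl cdotDl cdotZl hk00 hvp0 cs cc mulr0 addr0 mulr1.
have haj : cdot (col j U) ket0 = s.
  by rewrite Hj /ketminus cdotZl cdotBl cdotZl hk00 hvp0 cs cc mulr0 subr0 mulr1.
have hbi : cdot (col i U) v = s * (z + c * P).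
  by rewrite Hi /ketplus cdotZl cdotDl cdotZl hvpv cs cc.
have hbj : cdot (col j U) v = s * (z - c * P).
  by rewrite Hj /ketminus cdotZl cdotBl cdotZl hvpv cs cc.
have ij : i != j.
  apply/eqP => eij; move: Hj; rewrite -eij Hi => /eqP; rewrite -subr_eq0.
  have -> : ketplus - ketminus = (s * c * 2) *: vperp.
    by apply/matrixP => k l; rewrite !mxE; ring.
  rewrite scaler_eq0 (negbTE vp0) orbF !mulf_eq0 (negbTE s0) (negbTE c0) /=.
  by rewrite pnatr_eq0.
have hoth x : x != i -> x != j ->
    cdot (col x U) ket0 = 0 /\ cdot (col x U) v = 0.
  move=> xi xj.
  have e1 : cdot (col x U) ketplus = 0 by rewrite -Hi hU (negbTE xi).
  have e2 : cdot (col x U) ketminus = 0 by rewrite -Hj hU (negbTE xj).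
  move: e1 e2; rewrite /ketplus /ketminus !cdotZr cdotDr cdotBr !cdotZr => e1 e2.
  case: (solve2 s0 c0 e1 e2) => a0 w0.
  by rewrite a0; split => //; rewrite hvE cdotDr cdotZr w0 a0 mulr0 addr0.
have hpp1 t : \sum_x pp (Aof x) (Bof x) t = 1.
  rewrite /pp /Aof /Bof; under eq_bigr do rewrite -Re_conjM.
  by rewrite -raddf_sum complete // hunit.
have hdp0 (t : R) : \sum_x dp (Aof x) (Bof x) t = 0.
  have H := is_derive_sum (fun x => pp_derive (dA x t) (dB x t)).
  case: H => _ <-.
  have -> : (\sum_x pp (Aof x) (Bof x)) = cst 1.
    by apply/funext => u; rewrite fct_sumE hpp1.
  exact: derive_cst.
have hddp0 : \sum_x ddp (Aof x) (Bof x) lam = 0.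
  have H := is_derive_sum (fun x => dp_derive (dA x lam) (dB x lam) (dA' x lam) (dB' x lam)).
  case: H => _ <-.
  have -> : (\sum_x dp (Aof x) (Bof x)) = cst 0.
    by apply/funext => u; rewrite fct_sumE hdp0.
  exact: derive_cst.
have hAl x : Aof x lam = complex.Re (cdot (col x U) ket0) by [].
have hBl x : Bof x lam = complex.Im (cdot (col x U) ket0) by [].
have hA'l x : derive1 (Aof x) lam = complex.Re (cdot (col x U) v) by rewrite dAE.
have hB'l x : derive1 (Bof x) lam = complex.Im (cdot (col x U) v) by rewrite dBE.
have hppi : pp (Aof i) (Bof i) lam = 2^-1.
  by rewrite /pp hAl hBl hai sE /= expr0n addr0 rr.
have hppj : pp (Aof j) (Bof j) lam = 2^-1.
  by rewrite /pp hAl hBl haj sE /= expr0n addr0 rr.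
have hdpi : dp (Aof i) (Bof i) lam = complex.Re z + n.
  rewrite /dp hAl hBl hA'l hB'l hai hbi sE cE /= mul0r addr0.
  rewrite Re_realM raddfD /= Re_realM -nn.
  move: (complex.Re z) (lt0r_neq0 n0) rr => a nz e.
  transitivity (2 * rv ^+ 2 * (a + n^-1 * n ^+ 2)); first by ring.
  rewrite e; field; exact: nz.
have hdpj : dp (Aof j) (Bof j) lam = complex.Re z - n.
  rewrite /dp hAl hBl hA'l hB'l haj hbj sE cE /= mul0r addr0.
  rewrite Re_realM raddfB /= Re_realM -nn.
  move: (complex.Re z) (lt0r_neq0 n0) rr => a nz e.
  transitivity (2 * rv ^+ 2 * (a - n^-1 * n ^+ 2)); first by ring.
  rewrite e; field; exact: nz.
have hothz x : x != i -> x != j -> Aof x lam = 0 /\ Bof x lam = 0 /\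
    derive1 (Aof x) lam = 0 /\ derive1 (Bof x) lam = 0.
  move=> xi xj; case: (hoth x xi xj) => a0 b0.
  by rewrite hAl hBl hA'l hB'l a0 b0.
have hz : complex.Re z = 0.
  have := hdp0 lam; rewrite (sum2 ij) ?hdpi ?hdpj.
    by move=> e; lra.
  move=> x xi xj; case: (hothz x xi xj) => [a0 [b0 [a1 b1]]].
  by rewrite /dp a0 b0 !mul0r addr0 mulr0.
have hdd : ddp (Aof i) (Bof i) lam + ddp (Aof j) (Bof j) lam = 0.
  rewrite -hddp0 (sum2 ij) // => x xi xj; case: (hothz x xi xj) => [a0 [b0 [a1 b1]]].
  by rewrite /ddp a0 b0 a1 b1 !mul0r expr0n !add0r mulr0.
pose val x := if (x == i) || (x == j) then
   ddp (Aof x) (Bof x) lam * (ln (pp (Aof x) (Bof x) lam) + 1)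
     + dp (Aof x) (Bof x) lam ^+ 2 / pp (Aof x) (Bof x) lam else 0.
have hx x : is_derive lam 1 (D1 (Aof x) (Bof x)) (val x).
  rewrite /val; case: ifP => hxij.
    apply: D1_derive_pos => //.
    have -> : pp (Aof x) (Bof x) lam = 2^-1 by case/orP: hxij => /eqP ->.
    by rewrite invr_gt0.
  move: hxij => /negbT; rewrite negb_or => /andP [xi xj].
  case: (hothz x xi xj) => [a0 [b0 [a1 b1]]].
  exact: D1_derive_zero.
have hG : is_derive lam 1 G (- \sum_x val x).
  have H := is_deriveN (is_derive_sum hx).
  apply: (is_derive_conv _ _ H) => //.
  by move=> u; rewrite /G fct_sumE.
split.
  by rewrite df1; apply: derivable_shift; rewrite addr0; case: hG.
have -> : derive1n 2 f 0 = derive1 G lam.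
  by rewrite /derive1n /= df1 derive1_shift addr0.
rewrite derive1E; case: hG => _ ->.
have hvv : cdot v v = P + z^* * z.
  have -> : cdot v v = cdot (vperp + z *: ket0) (vperp + z *: ket0) by rewrite -hvE.
  exact: cdot_decomp.
have hv0 : cdot v ket0 = z^* by rewrite cdotC.
have hgfs : gFS ket0 v = complex.Re P.
  rewrite /gFS hvv hv0 raddfD /= conjCK mulrC.
  by rewrite addrK.
rewrite hgfs opprK (sum2 ij); last first.
  by move=> x xi xj; rewrite /val (negbTE xi) (negbTE xj).
rewrite /val eqxx /= eqxx orbT hppi hppj hdpi hdpj hz add0r sub0r -nn.
move: hdd; move: (ddp (Aof i) (Bof i) lam) (ddp (Aof j) (Bof j) lam) => di dj e.
have hdj : dj = - di by lra.
rewrite hdj sqrrN invrK; ring.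
Unshelve. all: by end_near.
Qed.
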